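(* Let $\phi_{\mathrm p}$ (on $\mathbb R^n$) and $\phi_{\mathrm d}$ (on $\mathbb R^m$) be Bregman kernels with distances $d_{\mathrm p},d_{\mathrm d}$ satisfying $d_{\mathrm p}(x,x')\ge\frac12\|x-x'\|_{\mathrm p}^2$ and $d_{\mathrm d}(z,z')\ge\frac12\|z-z'\|_{\mathrm d}^2$ for all $(x,x')\in\operatorname{dom} d_{\mathrm p}$, $(z,z')\in\operatorname{dom} d_{\mathrm d}$, where $\|\cdot\|_{\mathrm p},\|\cdot\|_{\mathrm d}$ are norms. Let $h$ be a convex function, differentiable on its open domain, with $\operatorname{dom}\phi_{\mathrm p}\subseteq\operatorname{dom} h$ and, for some $L>0$, $h(x)-h(x')-\langle\nabla h(x'),x-x'\rangle\le L\,d_{\mathrm p}(x,x')$ for all $(x,x')\in\operatorname{dom} d_{\mathrm p}$. Let $A\in\mathbb R^{m\times n}$, $\|A\|=\sup_{u\ne0,v\ne0}\frac{\langle v,Au\rangle}{\|v\|_{\mathrm d}\|u\|_{\mathrm p}}$, and $\sigma,\tau>0$. Define \[\phi_\pm(x,z)=\tfrac1\tau\phi_{\mathrm p}(x)+\tfrac1\sigma\phi_{\mathrm d}(z)\pm\langle z,Ax\rangle,\qquad \phi_{\mathrm{dcv}}=\phi_+-h,\quad \phi_{\mathrm{pcv}}=\phi_--h.\] Then: if $\sigma\tau\|A\|^2\le1$, the functions $\phi_+$ and $\phi_-$ are convex, and they are strongly convex if $\sigma\tau\|A\|^2<1$; if $\sigma\tau\|A\|^2+\tau L\le1$, the functions $\phi_{\mathrm{dcv}}$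 and $\phi_{\mathrm{pcv}}$ are convex, and they are strongly convex if $\sigma\tau\|A\|^2+\tau L<1$.
   Context: A Bregman kernel is a convex function $\phi$ whose domain has nonempty interior, continuous on $\operatorname{dom}\phi$ and continuously differentiable on $\operatorname{int}(\operatorname{dom}\phi)$; its Bregman distance is $d(x,y)=\phi(x)-\phi(y)-\langle\nabla\phi(y),x-y\rangle$ with $\operatorname{dom} d=\operatorname{dom}\phi\times\operatorname{int}(\operatorname{dom}\phi)$. The functions $h(x)$, $\phi_\pm$ etc. are considered on $\operatorname{dom}\phi_{\mathrm p}\times\operatorname{dom}\phi_{\mathrm d}$. *)

(* Defs.v *)
From mathcomp Require Import all_boot all_algebra all_classical all_reals all_analysis.
Set Implicit Arguments. Unset Strict Implicit. Unset Printing Implicit Defensive.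
Import GRing.Theory Num.Theory.
Local Open Scope ring_scope.
Local Open Scope classical_set_scope.

Section Defs.
Variable R : realType.

(** Column vectors of R^n, with their canonical normed-module topology
    (used only for topology/differentiability; all norms on R^n are
    equivalent, so this is the usual topology of R^n). *)
Definition vec (n : nat) : normedModType R := 'cV[R]_n.

Definition dotv (n : nat) (u v : 'cV[R]_n) : R := \sum_(i < n) u i 0 * v i 0.

Definition is_norm (n : nat) (N : 'cV[R]_n -> R) : Prop :=
  [/\ forall x, N x = 0 -> x = 0,
      forall (a : R) x, N (a *: x) = `|a| * N x &
      forall x y, N (x + y) <= N x + N y].

(** A real function f is convex on D (D is the effective domain of the
    extended-valued function equal to f on D and +oo outside): D is convex
    and Jensen's inequality holds on D. *)
Definition convex_on (V : lmodType R) (D : set V) (f : V -> R) : Prop :=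
  forall x y, D x -> D y -> forall t : R, 0 <= t <= 1 ->
    D (t *: x + (1 - t) *: y) /\
    f (t *: x + (1 - t) *: y) <= t * f x + (1 - t) * f y.

Definition strongly_convex_on (V : lmodType R) (N : V -> R)
    (D : set V) (f : V -> R) : Prop :=
  exists2 mu : R, 0 < mu &
  forall x y, D x -> D y -> forall t : R, 0 <= t <= 1 ->
    D (t *: x + (1 - t) *: y) /\
    f (t *: x + (1 - t) *: y) <=
      t * f x + (1 - t) * f y - mu / 2 * t * (1 - t) * N (x - y) ^+ 2.

(** Continuity of the gradient
    y |-> grad phi y on int D is expressed through its directional
    components y |-> 'd phi y v (equivalent in finite dimension). *)
Definition bregman_kernel (n : nat) (D : set (vec n)) (phi : vec n -> R) : Prop :=
  [/\ convex_on D phi,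
      interior D !=set0,
      {within D, continuous (phi : vec n -> R^o)},
      (forall x, interior D x -> differentiable phi x) &
      (forall (v : vec n) x, interior D x ->
         {for x, continuous (fun y : vec n => ('d phi y v : R^o))})].

(** Bregman distance d(x,y) = phi x - phi y - <grad phi y, x - y>,
    where <grad phi y, v> is the differential 'd phi y v;
    its domain is D x int D. *)
Definition bregman_dist (n : nat) (phi : vec n -> R) (x y : vec n) : R :=
  phi x - phi y - 'd phi y (x - y).

Definition op_norm (m n : nat) (Np : 'cV[R]_n -> R) (Nd : 'cV[R]_m -> R)
    (A : 'M[R]_(m, n)) : R :=
  sup [set r : R | exists u : 'cV[R]_n, exists v : 'cV[R]_m,
         [/\ u != 0, v != 0 & r = dotv v (A *m u) / (Nd v * Np u)]].

Definition phi_pm (m n : nat) (s : R) (phip : vec n -> R) (phid : vec m -> R)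
    (A : 'M[R]_(m, n)) (sigma tau : R) (p : vec n * vec m) : R :=
  tau^-1 * phip p.1 + sigma^-1 * phid p.2 + s * dotv p.2 (A *m p.1).

End Defs.

(* Main.v *)
Require Import Defs.
From mathcomp Require Import all_boot all_algebra all_classical all_reals all_analysis.
From mathcomp Require Import ring lra.
Import order.Order.TTheory GRing.Theory Num.Theory numFieldNormedType.Exports.
Local Open Scope ring_scope.
Local Open Scope classical_set_scope.

Unset Implicit Arguments. Set Strict Implicit.

Section Norms.
Variable R : realType.

Lemma isn0 n (N : 'cV[R]_n -> R) : is_norm N -> N 0 = 0.
Proof. by case=> _ hZ _; have := hZ 0 0; rewrite scale0r normr0 mul0r. Qed.

Lemma isnN n (N : 'cV[R]_n -> R) x : is_norm N -> N (- x) = N x.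
Proof. by case=> _ hZ _; rewrite -scaleN1r hZ normrN normr1 mul1r. Qed.

Lemma isn_ge0 n (N : 'cV[R]_n -> R) x : is_norm N -> 0 <= N x.
Proof.
move=> hN; have := hN => -[_ _ hT]; have := hT x (- x).
rewrite subrr isn0 // isnN //; lra.
Qed.

Lemma isn_rev n (N : 'cV[R]_n -> R) a b : is_norm N -> `|N a - N b| <= N (a - b).
Proof.
move=> hN; have := hN => -[_ _ hT].
have h1 := hT (a - b) b; have h2 := hT (b - a) a.
rewrite subrK in h1; rewrite subrK in h2.
have := @isnN n N (a - b) hN; rewrite opprB => h3.
rewrite ler_norml; lra.
Qed.

Lemma isn_sum n (N : 'cV[R]_n -> R) (I : finType) (F : I -> 'cV[R]_n) :
  is_norm N -> N (\sum_i F i) <= \sum_i N (F i).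
Proof.
move=> hN; have := hN => -[_ _ hT].
elim/big_rec2: _ => [|i y1 y2 _ h]; first by rewrite isn0.
by apply: le_trans (hT _ _) _; rewrite lerD2l.
Qed.

Lemma entry_le_norm p q (x : 'M[R]_(p, q)) i j : `|x i j| <= `|x|.
Proof.
rewrite [X in _ <= X]/Num.Def.normr /= mx_normrE; apply/bigmax_geP; right => /=.
by exists (i, j).
Qed.

Lemma isn_upper n (N : 'cV[R]_n -> R) (x : 'cV[R]_n) : is_norm N ->
  N x <= \sum_(i < n) `|x i 0| * N (delta_mx i 0).
Proof.
move=> hN; have := hN => -[_ hZ _].
rewrite {1}(matrix_sum_delta x); apply: le_trans (@isn_sum n N _ _ hN) _.
apply: ler_sum => i _; rewrite big_ord1 hZ.
by have -> : (0 : 'I_1) = ord0 by apply: val_inj.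
Qed.

Lemma isn_Kr n (N : 'cV[R]_n -> R) (w : 'rV[R]_n) : is_norm N ->
  N w^T <= (\sum_(i < n) N (delta_mx i 0)) * `|w|.
Proof.
move=> hN; apply: le_trans (@isn_upper n N _ hN) _.
rewrite mulr_suml; apply: ler_sum => i _.
rewrite mulrC ler_wpM2l ?isn_ge0 // mxE; exact: entry_le_norm.
Qed.

Lemma isn_lower n (N : 'cV[R]_n -> R) : is_norm N ->
  exists2 c : R, 0 < c & forall (u : 'cV[R]_n) i, c * `|u i 0| <= N u.
Proof.
move=> hN; have := hN => -[h0 hZ hT].
pose K := \sum_(i < n) N (delta_mx i 0).
have K0 : 0 <= K by apply: sumr_ge0 => i _; exact: isn_ge0.
pose g (w : 'rV[R]_n) := N w^T.
have gc : continuous g.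
  move=> w; apply/(@cvgrPdist_lt _ _ _ (nbhs w) _ g) => e e0.
  have K1 : 0 < K + 1 by lra.
  near=> a; rewrite /g.
  apply: le_lt_trans (@isn_rev n N _ _ hN) _.
  rewrite -linearB /=; apply: le_lt_trans (@isn_Kr n N _ hN) _.
  apply: le_lt_trans (_ : (K + 1) * `|w - a| < _).
    rewrite ler_wpM2r // -/K; lra.
  rewrite -ltr_pdivlMl //.
  near: a; apply: cvgr_dist_lt; [exact: cvg_id | by rewrite mulr_gt0 ?invr_gt0].
pose S := [set w : 'rV[R]_n | `|w| = 1].
have Sc : compact S.
  apply: bounded_closed_compact.
    exists 1; split; first exact: real1.
    by move=> M M1 x /= ->; apply: ltW.
  apply: (@preimage_closed _ _ (fun w : 'rV[R]_n => `|w|) [set x | x = 1]).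
    by move=> x _; exact: norm_continuous.
  exact: closed_eq.
have [Sne|Se] := pselect (S !=set0); last first.
  exists 1 => // u i; rewrite mul1r.
  have : u^T = 0.
    apply/eqP; apply: contra_notT Se => un0; exists (`|u^T|^-1 *: u^T).
    rewrite /S /= normrZ normfV normr_id mulVf //.
    by rewrite normr_eq0.
  move=> /(congr1 (fun x : 'rV[R]_n => x 0 i)); rewrite !mxE => ->.
  by rewrite normr0 isn_ge0.
have [c cS cmin] := compact_EVT_min Sne Sc (continuous_subspaceT gc).
have c0 : 0 < g c.
  rewrite lt0r isn_ge0 // andbT; apply/eqP => /h0 /(congr1 trmx).
  rewrite trmxK linear0 => c0; move: cS; rewrite inE /S /= c0 normr0.
  by move=> /esym/eqP; rewrite oner_eq0.
exists (g c) => // u i.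
have [->|un0] := eqVneq u 0; first by rewrite mxE normr0 mulr0 (@isn0 n N hN).
have ut0 : `|u^T| != 0.
  rewrite normr_eq0; apply: contra_neq un0 => /(congr1 trmx).
  by rewrite trmxK linear0.
have wS : (`|u^T|^-1 *: u^T) \in S.
  by rewrite inE /S /= normrZ normfV normr_id mulVf.
have := cmin _ wS; rewrite /g linearZ /= trmxK hZ normfV normr_id => hc.
have eu : N u = `|u^T| * (`|u^T|^-1 * N u) by rewrite mulrA mulfV ?mul1r.
rewrite eu [X in _ <= X]mulrC; apply: ler_pM => //; first exact: ltW.
Unshelve. all: try by end_near. by have := @entry_le_norm _ _ u^T 0 i; rewrite mxE.
Qed.
End Norms.

Set Implicit Arguments. Unset Strict Implicit.

Section Key.
Variable R : realType.
Variable V : normedModType R.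

Definition convD (D : set V) := forall x y, D x -> D y -> forall t : R, 0 <= t <= 1 ->
    D (t *: x + (1 - t) *: y).

Lemma int_comb (D : set V) x x0 e : convD D -> D x -> interior D x0 -> 0 < e <= 1 ->
  interior D ((1 - e) *: x + e *: x0).
Proof.
move=> cD Dx /nbhs_ballP[r r0 rD] /andP[e0 e1].
apply/nbhs_ballP; exists (e * r); first by rewrite /= mulr_gt0.
move=> y; rewrite -ball_normE /= => hy.
have -> : y = (1 - e) *: x + (1 - (1 - e)) *: (x0 + e^-1 *: (y - ((1 - e) *: x + e *: x0))).
  have -> : 1 - (1 - e) = e by ring.
  apply/esym; rewrite scalerDr scalerA mulfV ?gt_eqF // scale1r addrA.
  by rewrite addrC subrK.
apply: cD => //; last by apply/andP; split; lra.
apply: rD; rewrite -ball_normE /= opprD addrA subrr add0r normrN normrZ.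
rewrite gtr0_norm ?invr_gt0 // ltr_pdivrMl //.
by rewrite distrC.
Qed.

Lemma int_seg (D : set V) x y t : convD D -> interior D x -> interior D y ->
  0 <= t <= 1 -> interior D (t *: x + (1 - t) *: y).
Proof.
move=> cD ix iy /andP[t0 t1].
have [->|t1'] := eqVneq t 1; first by rewrite subrr scale0r addr0 scale1r.
have := @int_comb D x y (1 - t) cD (interior_subset ix) iy.
rewrite (_ : 1 - (1 - t) = t); last by ring.
apply; apply/andP; split; last lra.
by rewrite subr_gt0 lt_neqAle t1' t1.
Qed.


Lemma alg1 (x y : V) (t : R) : x - (t *: x + (1 - t) *: y) = (1 - t) *: (x - y).
Proof. rewrite scalerBr [(1 - t) *: x]scalerBl scale1r opprD addrA. done. Qed.
Lemma alg2 (x y : V) (t : R) : y - (t *: x + (1 - t) *: y) = (- t) *: (x - y).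
Proof.
rewrite [(1 - t) *: y]scalerBl scale1r opprD opprB.
rewrite scalerBr !scaleNr opprK addrCA [y + _]addrC subrK. done. Qed.

Lemma alg3 (x y x0 : V) (t e : R) :
  (1 - e) *: (t *: x + (1 - t) *: y) + e *: x0 =
  t *: ((1 - e) *: x + e *: x0) + (1 - t) *: ((1 - e) *: y + e *: x0).
Proof.
rewrite !scalerDr !scalerA addrACA -scalerDl.
rewrite (_ : t * e + (1 - t) * e = e); last by ring.
by rewrite (mulrC t) (mulrC (1 - t)).
Qed.
Lemma alg4 (x y x0 : V) (e : R) :
  ((1 - e) *: x + e *: x0) - ((1 - e) *: y + e *: x0) = (1 - e) *: (x - y).
Proof. by rewrite opprD addrACA subrr addr0 scalerBr. Qed.

Lemma key (D : set V) (f : V -> R) (l : V -> V -> R) (c : R) (N : V -> R) :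
  (forall (a : R) x, N (a *: x) = `|a| * N x) ->
  convD D -> interior D !=set0 ->
  (forall z a b (al be : R), l z (al *: a + be *: b) = al * l z a + be * l z b) ->
  (forall x z, D x -> interior D z -> c / 2 * N (x - z) ^+ 2 <= f x - f z - l z (x - z)) ->
  (forall x x0, D x -> interior D x0 -> f ((1 - e) *: x + e *: x0) @[e --> 0^'+] --> f x) ->
  forall x y, D x -> D y -> forall t : R, 0 <= t <= 1 ->
  f (t *: x + (1 - t) *: y) <= t * f x + (1 - t) * f y - c / 2 * t * (1 - t) * N (x - y) ^+ 2.
Proof.
move=> NZ cD [x0 ix0] lL hB hC.
have l0 z : l z 0 = 0.
  by have := lL z 0 0 0 0; rewrite !scale0r addr0 !mul0r addr0.
have hint x y t : interior D x -> interior D y -> 0 <= t <= 1 ->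
    f (t *: x + (1 - t) *: y) <= t * f x + (1 - t) * f y - c / 2 * t * (1 - t) * N (x - y) ^+ 2.
  move=> ix iy t01; have /andP[t0 t1] := t01.
  set z := t *: x + (1 - t) *: y.
  have iz : interior D z := int_seg cD ix iy t01.
  have h1 := hB x z (interior_subset ix) iz.
  have h2 := hB y z (interior_subset iy) iz.
  have el : t * l z (x - z) + (1 - t) * l z (y - z) = 0.
    rewrite -lL alg1 alg2 !scalerA -scalerDl.
    rewrite (_ : t * (1 - t) + (1 - t) * - t = 0); last by ring.
    by rewrite scale0r l0.
  have Nx : N (x - z) = (1 - t) * N (x - y).
    by rewrite alg1 NZ ger0_norm //; lra.
  have Ny : N (y - z) = t * N (x - y).
    by rewrite alg2 NZ normrN ger0_norm.
  rewrite Nx in h1; rewrite Ny in h2.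
  have e1 : c / 2 * t * (1 - t) * N (x - y) ^+ 2 =
     t * (c / 2 * ((1 - t) * N (x - y)) ^+ 2) + (1 - t) * (c / 2 * (t * N (x - y)) ^+ 2).
    by ring.
  have h1' := ler_wpM2l t0 h1.
  have t0' : 0 <= 1 - t by lra.
  have h2' := ler_wpM2l t0' h2.
  move: h1' h2' el e1; rewrite !mulrBr; lra.
move=> x y Dx Dy t t01; have /andP[t0 t1] := t01.
have Dz := cD x y Dx Dy t t01.
set z := t *: x + (1 - t) *: y.
have cx := hC x x0 Dx ix0; have cy := hC y x0 Dy ix0; have cz := hC z x0 Dz ix0.
set M := N (x - y).
rewrite expr2.
have cM : (c / 2 * t * (1 - t) * (((1 - e) * M) * ((1 - e) * M))) @[e --> 0^'+] --> c / 2 * t * (1 - t) * (M * M).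
  apply: cvg_at_right_filter.
  have -> : c / 2 * t * (1 - t) * (M * M) = c / 2 * t * (1 - t) * (((1 - 0) * M) * ((1 - 0) * M)).
    by rewrite subr0 mul1r.
  have c1 : ((1 - e) * M) @[e --> 0] --> (1 - 0) * M.
    apply: cvgM; last exact: cvg_cst.
    by apply: cvgB; [exact: cvg_cst | exact: cvg_id].
  apply: cvgM; first exact: cvg_cst.
  exact: cvgM.
apply: (ler_cvg_to cz (cvgB (cvgD (cvgM (cvg_cst t) cx) (cvgM (cvg_cst (1 - t)) cy)) cM)).
near=> e.
have e0 : 0 < e by near: e; exact: nbhs_right_gt.
have e1 : e < 1 by near: e; exact: nbhs_right_lt.
have e01 : 0 < e <= 1 by apply/andP; split; lra.
rewrite alg3.
have := hint _ _ t (int_comb cD Dx ix0 e01) (int_comb cD Dy ix0 e01) t01.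
rewrite alg4 NZ ger0_norm; last lra.
by rewrite expr2.
Unshelve. all: by end_near.
Qed.

End Key.

Set Implicit Arguments. Unset Strict Implicit.

Section Cont.
Variable R : realType.
Variable V : normedModType R.

Lemma seg_cvg (x x0 : V) : ((1 - e) *: x + e *: x0) @[e --> 0^'+] --> x.
Proof.
apply: cvg_at_right_filter.
suff : ((1 - e) *: x + e *: x0) @[e --> 0] --> (1 - 0) *: x + 0 *: x0.
  by rewrite subr0 scale1r scale0r addr0.
apply: cvgD; apply: cvgZ; try exact: cvg_cst; try exact: cvg_id.
by apply: cvgB; [exact: cvg_cst | exact: cvg_id].
Qed.

Lemma seg_cont (D : set V) (f : V -> R) x x0 :
  (forall y z, D y -> D z -> forall t : R, 0 <= t <= 1 -> D (t *: y + (1 - t) *: z)) ->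
  D x -> D x0 -> f @ within D (nbhs x) --> f x ->
  f ((1 - e) *: x + e *: x0) @[e --> 0^'+] --> f x.
Proof.
move=> cD Dx Dx0 hf U /hf hU.
have h1 : \forall e \near 0^'+, D ((1 - e) *: x + e *: x0) -> U (f ((1 - e) *: x + e *: x0)) := @seg_cvg x x0 _ hU.
have h2 : \forall e \near 0^'+, D ((1 - e) *: x + e *: x0).
  near=> e.
  have e0 : 0 < e by near: e; exact: nbhs_right_gt.
  have e1 : e < 1 by near: e; exact: nbhs_right_lt.
  have := cD x x0 Dx Dx0 (1 - e).
  rewrite (_ : 1 - (1 - e) = e); last by ring.
  by apply; apply/andP; split; lra.
change (\forall e \near 0^'+, U (f ((1 - e) *: x + e *: x0))).
by apply: filterS2 h1 h2 => e; apply.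
Unshelve. all: by end_near.
Qed.

End Cont.

Set Implicit Arguments. Unset Strict Implicit.

Section Dot.
Variable R : realType.

Lemma dotvDl n (u1 u2 v : 'cV[R]_n) : dotv (u1 + u2) v = dotv u1 v + dotv u2 v.
Proof. by rewrite /dotv -big_split; apply: eq_bigr => i _; rewrite mxE mulrDl. Qed.
Lemma dotvDr n (u v1 v2 : 'cV[R]_n) : dotv u (v1 + v2) = dotv u v1 + dotv u v2.
Proof. by rewrite /dotv -big_split; apply: eq_bigr => i _; rewrite mxE mulrDr. Qed.
Lemma dotvZl n k (u v : 'cV[R]_n) : dotv (k *: u) v = k * dotv u v.
Proof. by rewrite /dotv mulr_sumr; apply: eq_bigr => i _; rewrite mxE mulrA. Qed.
Lemma dotvZr n k (u v : 'cV[R]_n) : dotv u (k *: v) = k * dotv u v.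
Proof. by rewrite /dotv mulr_sumr; apply: eq_bigr => i _; rewrite mxE mulrCA. Qed.
Lemma dotvNl n (u v : 'cV[R]_n) : dotv (- u) v = - dotv u v.
Proof. by rewrite -scaleN1r dotvZl mulN1r. Qed.
Lemma dotvNr n (u v : 'cV[R]_n) : dotv u (- v) = - dotv u v.
Proof. by rewrite -scaleN1r dotvZr mulN1r. Qed.
Lemma dotv0l n (v : 'cV[R]_n) : dotv 0 v = 0.
Proof. by have := dotvZl 0 0 v; rewrite scale0r mul0r. Qed.
Lemma dotv0r n (v : 'cV[R]_n) : dotv v 0 = 0.
Proof. by have := dotvZr 0 v 0; rewrite scale0r mul0r. Qed.

Lemma quad_id m n (A : 'M[R]_(m, n)) (x1 x2 : 'cV[R]_n) (z1 z2 : 'cV[R]_m) (t : R) :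
  dotv (t *: z1 + (1 - t) *: z2) (A *m (t *: x1 + (1 - t) *: x2)) =
  t * dotv z1 (A *m x1) + (1 - t) * dotv z2 (A *m x2)
  - t * (1 - t) * dotv (z1 - z2) (A *m (x1 - x2)).
Proof.
rewrite mulmxDr mulmxBr -!scalemxAr !dotvDl !dotvDr !dotvZl !dotvZr.
rewrite !dotvNl !dotvNr opprK.
ring.
Qed.

Lemma dot_bound m n (Np : 'cV[R]_n -> R) (Nd : 'cV[R]_m -> R) (A : 'M[R]_(m, n)) :
  is_norm Np -> is_norm Nd ->
  exists C : R, forall u v, `|dotv v (A *m u)| <= C * (Nd v * Np u).
Proof.
move=> hp hd.
have [cp cp0 hcp] := @isn_lower _ _ _ hp; have [cd cd0 hcd] := @isn_lower _ _ _ hd.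
exists ((\sum_i \sum_j `|A i j|) / (cd * cp)) => u v.
rewrite /dotv; apply: le_trans (ler_norm_sum _ _ _) _.
rewrite -mulrA mulr_suml; apply: ler_sum => i _.
rewrite normrM mxE; apply: le_trans (ler_wpM2l (normr_ge0 _) (ler_norm_sum _ _ _)) _.
rewrite mulr_sumr mulr_suml; apply: ler_sum => j _.
rewrite normrM.
have hv : `|v i 0| <= Nd v / cd by rewrite ler_pdivlMr // mulrC hcd.
have hu : `|u j 0| <= Np u / cp by rewrite ler_pdivlMr // mulrC hcp.
have e : `|A i j| * ((cd * cp)^-1 * (Nd v * Np u)) = (Nd v / cd) * (`|A i j| * (Np u / cp)).
  by rewrite invfM; ring.
rewrite e; apply: ler_pM => //; exact: ler_wpM2l.
Qed.

Lemma opn_bound m n (Np : 'cV[R]_n -> R) (Nd : 'cV[R]_m -> R) (A : 'M[R]_(m, n)) :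
  is_norm Np -> is_norm Nd -> forall u v,
  dotv v (A *m u) <= op_norm Np Nd A * Nd v * Np u.
Proof.
move=> hp hd u v.
have [->|u0] := eqVneq u 0; first by rewrite mulmx0 dotv0r (@isn0 _ _ _ hp) mulr0.
have [->|v0] := eqVneq v 0; first by rewrite dotv0l (@isn0 _ _ _ hd) mulr0 mul0r.
have Nu : 0 < Np u.
  by rewrite lt0r (@isn_ge0 _ _ _ _ hp) andbT; apply: contra_neq u0; case: hp => h _ _; exact: h.
have Nv : 0 < Nd v.
  by rewrite lt0r (@isn_ge0 _ _ _ _ hd) andbT; apply: contra_neq v0; case: hd => h _ _; exact: h.
have [C hC] := dot_bound A hp hd.
rewrite /op_norm; set S := (X in sup X).
have inS : S (dotv v (A *m u) / (Nd v * Np u)) by exists u, v.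
have hS : has_sup S.
  split; first by exists (dotv v (A *m u) / (Nd v * Np u)).
  exists C => r [u' [v' [u0' v0' ->]]].
  have Nu' : 0 < Np u'.
    by rewrite lt0r (@isn_ge0 _ _ _ _ hp) andbT; apply: contra_neq u0'; case: hp => h _ _; exact: h.
  have Nv' : 0 < Nd v'.
    by rewrite lt0r (@isn_ge0 _ _ _ _ hd) andbT; apply: contra_neq v0'; case: hd => h _ _; exact: h.
  rewrite ler_pdivrMr ?mulr_gt0 //; apply: le_trans (hC u' v'); exact: ler_norm.
have := sup_upper_bound hS inS; rewrite -/(op_norm Np Nd A).
rewrite ler_pdivrMr ?mulr_gt0 // mulrA //.
Qed.

End Dot.

Set Implicit Arguments. Unset Strict Implicit.

Section Fin.
Variable R : realType.

Lemma amgm (P Q K a b : R) : 0 <= P -> 0 <= Q -> 0 <= K -> K ^+ 2 <= P * Q ->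
  0 <= a -> 0 <= b -> 2 * K * a * b <= P * a ^+ 2 + Q * b ^+ 2.
Proof.
move=> P0 Q0 K0 hK a0 b0.
have X0 : 0 <= P * a ^+ 2 + Q * b ^+ 2 by rewrite addr_ge0 // mulr_ge0 // exprn_ge0.
have Y0 : 0 <= 2 * K * a * b by rewrite !mulr_ge0.
rewrite -(@ler_pXn2r _ 2) // ?nnegrE //.
have h1 : 0 <= (P * a ^+ 2 - Q * b ^+ 2) ^+ 2 by exact: sqr_ge0.
have h2 : 0 <= (P * Q - K ^+ 2) * (a ^+ 2 * b ^+ 2).
  by rewrite mulr_ge0 ?subr_ge0 // mulr_ge0 // exprn_ge0.
have e : (P * a ^+ 2 + Q * b ^+ 2) ^+ 2 - (2 * K * a * b) ^+ 2 =
  (P * a ^+ 2 - Q * b ^+ 2) ^+ 2 + 4 * ((P * Q - K ^+ 2) * (a ^+ 2 * b ^+ 2)) by ring.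
rewrite -subr_ge0 e; lra.
Qed.

Lemma pick_mu (cF cG k : R) : 0 <= cF -> 0 < cG -> 0 <= k -> k < cF * cG ->
  exists2 mu : R, 0 < mu &
    [/\ 0 <= cF - 2 * mu, 0 <= cG - 2 * mu & k <= (cF - 2 * mu) * (cG - 2 * mu)].
Proof.
move=> cF0 cG0 k0 hk.
set d := cF + cG; have d0 : 0 < d by rewrite /d; lra.
set del := cF * cG - k; have del0 : 0 < del by rewrite /del; lra.
exists (del / (2 * d)); first by rewrite divr_gt0 // mulr_gt0.
have e : 2 * (del / (2 * d)) * d = del by field; rewrite /d; lra.
set mu := del / (2 * d) in e *.
have mu0 : 0 <= mu by rewrite /mu divr_ge0 // ?mulr_ge0 //; [lra|lra].
have hF : 0 <= (cF - 2 * mu) * d.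
  have -> : (cF - 2 * mu) * d = cF ^+ 2 + k by rewrite /d /del in e *; nra.
  by rewrite addr_ge0 // sqr_ge0.
have hG : 0 <= (cG - 2 * mu) * d.
  have -> : (cG - 2 * mu) * d = cG ^+ 2 + k by rewrite /d /del in e *; nra.
  by rewrite addr_ge0 // sqr_ge0.
split.
- nra.
- nra.
- rewrite /d /del in e; nra.
Qed.


Lemma sc_F n (D : set (vec R n)) (phi h : vec R n -> R) (N : 'cV[R]_n -> R) (a b L : R) :
  bregman_kernel D phi -> is_norm N ->
  (forall x x', D x -> interior D x' -> bregman_dist phi x x' >= 2^-1 * N (x - x') ^+ 2) ->
  (forall x, D x -> {for x, continuous h}) ->
  0 <= b -> 0 <= a - b * L ->
  (forall x x', D x -> interior D x' ->
     b * (h x - h x' - 'd h x' (x - x')) <= b * (L * bregman_dist phi x x')) ->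
  forall x y, D x -> D y -> forall t : R, 0 <= t <= 1 ->
  D (t *: x + (1 - t) *: y) /\ (a * phi (t *: x + (1 - t) *: y) - b * h (t *: x + (1 - t) *: y) <=
  t * (a * phi x - b * h x) + (1 - t) * (a * phi y - b * h y)
    - (a - b * L) / 2 * t * (1 - t) * N (x - y) ^+ 2).
Proof.
move=> [cvx ine cont _ _] hN hB hc b0 c0 hh x y Dx Dy t t01.
have cD : convD D := fun x y Dx Dy t t01 => (cvx x y Dx Dy t t01).1.
split; first exact: cD.
have := @key R (vec R n) D (fun x => a * phi x - b * h x)
  (fun z w => a * 'd phi z w - b * 'd h z w) (a - b * L) N _ cD ine _ _ _ x y Dx Dy t t01.
apply.
- by case: hN.
- move=> z u v al be; rewrite !linearD !linearZ /= ?mulr_regl; rewrite /GRing.scale /=; ring.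
- move=> x1 z Dx1 iz; have h1 := hB x1 z Dx1 iz; have h2 := hh x1 z Dx1 iz.
  rewrite /bregman_dist in h1 h2.
  have -> : a * phi x1 - b * h x1 - (a * phi z - b * h z) -
     (a * 'd phi z (x1 - z) - b * 'd h z (x1 - z)) =
     a * (phi x1 - phi z - 'd phi z (x1 - z)) - b * (h x1 - h z - 'd h z (x1 - z)) by ring.
  move: h1 h2; set X := phi x1 - phi z - 'd phi z (x1 - z).
  set Y := h x1 - h z - 'd h z (x1 - z); set M := N (x1 - z) ^+ 2.
  move: X Y M => X Y M h1 h2.
  have h3 : 0 <= (a - b * L) * (X - 2^-1 * M) by apply: mulr_ge0 => //; lra.
  have e : (a - b * L) / 2 * M = (a - b * L) * (2^-1 * M) by ring.
  rewrite e; nra.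
- move=> x1 x0 Dx1 ix0; apply: (@seg_cont R (vec R n) D (fun x => a * phi x - b * h x) x1 x0) => //; first exact: interior_subset.
  apply: cvgB; apply: cvgM; try exact: cvg_cst.
    by have := (@subspace_continuousP _ D _ (phi : vec R n -> R^o)).1 cont x1 Dx1.
  exact: cvg_within_filter (hc x1 Dx1).
Qed.


Lemma comb m n (A : 'M[R]_(m, n)) (Np : 'cV[R]_n -> R) (Nd : 'cV[R]_m -> R)
  (Dp : set (vec R n)) (Dd : set (vec R m)) (F : vec R n -> R) (G : vec R m -> R)
  (s cF cG mu K : R) :
  `|s| <= 1 -> 0 <= K -> (forall x z, `|dotv z (A *m x)| <= K * Nd z * Np x) ->
  is_norm Np -> is_norm Nd ->
  0 <= mu -> 0 <= cF - 2 * mu -> 0 <= cG - 2 * mu -> K ^+ 2 <= (cF - 2 * mu) * (cG - 2 * mu) ->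
  (forall x y, Dp x -> Dp y -> forall t : R, 0 <= t <= 1 ->
     Dp (t *: x + (1 - t) *: y) /\ (F (t *: x + (1 - t) *: y) <=
     t * F x + (1 - t) * F y - cF / 2 * t * (1 - t) * Np (x - y) ^+ 2)) ->
  (forall x y, Dd x -> Dd y -> forall t : R, 0 <= t <= 1 ->
     Dd (t *: x + (1 - t) *: y) /\ (G (t *: x + (1 - t) *: y) <=
     t * G x + (1 - t) * G y - cG / 2 * t * (1 - t) * Nd (x - y) ^+ 2)) ->
  forall p q : vec R n * vec R m, (Dp `*` Dd) p -> (Dp `*` Dd) q ->
  forall t : R, 0 <= t <= 1 ->
  (Dp `*` Dd) (t *: p + (1 - t) *: q) /\ (F (t *: p + (1 - t) *: q).1 + G (t *: p + (1 - t) *: q).2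
     + s * dotv (t *: p + (1 - t) *: q).2 (A *m (t *: p + (1 - t) *: q).1) <=
   t * (F p.1 + G p.2 + s * dotv p.2 (A *m p.1))
   + (1 - t) * (F q.1 + G q.2 + s * dotv q.2 (A *m q.1))
   - mu / 2 * t * (1 - t) * (Np (p - q).1 + Nd (p - q).2) ^+ 2).
Proof.
move=> s1 K0 hK hp hd mu0 P0 Q0 hPQ hF hG [p1 p2] [q1 q2] [/= Dp1 Dd2] [/= Dq1 Dq2] t t01.
have /andP[t0 t1] := t01.
have [DF hF'] := hF p1 q1 Dp1 Dq1 t t01.
have [DG hG'] := hG p2 q2 Dd2 Dq2 t t01.
split; first by split.
rewrite /= quad_id.
move: hF' hG'.
set a := Np (p1 - q1); set b := Nd (p2 - q2).
set be := dotv (p2 - q2) (A *m (p1 - q1)).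
have hbe : `|be| <= K * b * a by exact: hK.
have a0 : 0 <= a by exact: isn_ge0.
have b0 : 0 <= b by exact: isn_ge0.
have am := amgm P0 Q0 K0 hPQ a0 b0.
have sb : - (s * be) <= K * b * a.
  have h1 : - (s * be) <= `|s| * `|be| by rewrite -normrM -normrN ler_norm.
  have h2 := ler_wpM2r (normr_ge0 be) s1.
  rewrite mul1r in h2; lra.
have ab : mu / 2 * (a + b) ^+ 2 <= mu * (a ^+ 2 + b ^+ 2).
  have : 0 <= mu * (a - b) ^+ 2 by rewrite mulr_ge0 // sqr_ge0.
  move=> h; nra.
have key2 : - (s * be) + mu / 2 * (a + b) ^+ 2 <= cF / 2 * a ^+ 2 + cG / 2 * b ^+ 2.
  nra.
have T0 : 0 <= t * (1 - t) by rewrite mulr_ge0 //; lra.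
have k3 := ler_wpM2l T0 key2.
move: k3; move: (F _) (G _) (F p1) (F q1) (G p2) (G q2) => Fz Gz F1 F2 G1 G2.
move: (dotv p2 (A *m p1)) (dotv q2 (A *m q1)) => B1 B2.
move: (a + b) => ab' k3 h1 h2.
nra.
Qed.

End Fin.

Unset Implicit Arguments. Set Strict Implicit.

Lemma bnd_le (R : realType) (s t k c : R) : 0 < s -> 0 < t -> s * t * k + t * c <= 1 ->
  k <= (t^-1 - c) * s^-1.
Proof.
move=> s0 t0 h.
have e : (t^-1 - c) * s^-1 = (1 - t * c) / (s * t) by field; apply/andP; split; lra.
rewrite e ler_pdivlMr ?mulr_gt0 //; lra.
Qed.

Lemma bnd_lt (R : realType) (s t k c : R) : 0 < s -> 0 < t -> s * t * k + t * c < 1 ->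
  k < (t^-1 - c) * s^-1.
Proof.
move=> s0 t0 h.
have e : (t^-1 - c) * s^-1 = (1 - t * c) / (s * t) by field; apply/andP; split; lra.
rewrite e ltr_pdivlMr ?mulr_gt0 //; lra.
Qed.

Theorem mainTheorem2 (R : realType) (n m : nat)
  (phip : vec R n -> R) (Dp : set (vec R n))
  (phid : vec R m -> R) (Dd : set (vec R m))
  (Np : 'cV[R]_n -> R) (Nd : 'cV[R]_m -> R)
  (h : vec R n -> R) (Dh : set (vec R n))
  (L : R) (A : 'M[R]_(m, n)) (sigma tau : R) :
  bregman_kernel Dp phip -> bregman_kernel Dd phid ->
  is_norm Np -> is_norm Nd ->
  (forall x x', Dp x -> interior Dp x' ->
     bregman_dist phip x x' >= 2^-1 * Np (x - x') ^+ 2) ->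
  (forall z z', Dd z -> interior Dd z' ->
     bregman_dist phid z z' >= 2^-1 * Nd (z - z') ^+ 2) ->
  open Dh -> convex_on Dh h -> (forall x, Dh x -> differentiable h x) ->
  Dp `<=` Dh ->
  0 < L ->
  (forall x x', Dp x -> interior Dp x' ->
     h x - h x' - 'd h x' (x - x') <= L * bregman_dist phip x x') ->
  0 < sigma -> 0 < tau ->
  let nA := op_norm Np Nd A in
  let D := Dp `*` Dd in
  let phi_plus := phi_pm 1 phip phid A sigma tau in
  let phi_minus := phi_pm (-1) phip phid A sigma tau in
  let phi_dcv := fun p => phi_plus p - h p.1 in
  let phi_pcv := fun p => phi_minus p - h p.1 in
  let N := fun p : vec R n * vec R m => Np p.1 + Nd p.2 in
  [/\ sigma * tau * nA ^+ 2 <= 1 ->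
        convex_on D phi_plus /\ convex_on D phi_minus,
      sigma * tau * nA ^+ 2 < 1 ->
        strongly_convex_on N D phi_plus /\ strongly_convex_on N D phi_minus,
      sigma * tau * nA ^+ 2 + tau * L <= 1 ->
        convex_on D phi_dcv /\ convex_on D phi_pcv &
      sigma * tau * nA ^+ 2 + tau * L < 1 ->
        strongly_convex_on N D phi_dcv /\ strongly_convex_on N D phi_pcv].
Proof.
move=> hkp hkd hnp hnd hBp hBd _ _ dh sub L0 hBh s0 t0.
move=> nA D phi_plus phi_minus phi_dcv phi_pcv N.
have hK : forall x z, `|dotv z (A *m x)| <= `|nA| * Nd z * Np x.
  move=> x z; have Nz := @isn_ge0 _ _ _ z hnd; have Nx := @isn_ge0 _ _ _ x hnp.
  have h1 := opn_bound A hnp hnd x z.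
  have h2 := opn_bound A hnp hnd x (- z).
  rewrite dotvNl (@isnN _ _ _ z hnd) in h2.
  have h3 : nA * Nd z * Np x <= `|nA| * Nd z * Np x.
    by rewrite -!mulrA ler_wpM2r ?mulr_ge0 // ler_norm.
  rewrite ler_norml; apply/andP; split; rewrite -/nA in h1 h2; lra.
have K0 : 0 <= `|nA| by [].
have nK : `|nA| ^+ 2 = nA ^+ 2 by rewrite real_normK ?num_real.
have nA0 : 0 <= nA ^+ 2 by exact: sqr_ge0.
have si0 : 0 < sigma^-1 by rewrite invr_gt0.
have ti0 : 0 < tau^-1 by rewrite invr_gt0.
have cst0 (k : nat) (D' : set (vec R k)) : forall x, D' x -> {for x, continuous (fun _ : vec R k => (0 : R))}.
  move=> x _; exact: (@cst_continuous _ _ (0 : R) x).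
have hF0 := sc_F (a := tau^-1) (b := 0) (L := L) hkp hnp hBp (cst0 _ Dp) (lexx 0).
have hG0 := sc_F (a := sigma^-1) (b := 0) (L := L) hkd hnd hBd (cst0 _ Dd) (lexx 0).
have hhp : forall x x', Dp x -> interior Dp x' ->
   1 * (h x - h x' - 'd h x' (x - x')) <= 1 * (L * bregman_dist phip x x').
  by move=> x x' Dx ix; rewrite !mul1r; exact: hBh.
have hF1 := sc_F (a := tau^-1) (b := 1) (L := L) hkp hnp hBp
  (fun x Dx => differentiable_continuous (dh x (sub x Dx))) ler01.
have c00 : 0 <= tau^-1 - 0 * L by rewrite mul0r subr0 ltW.
have c01 : 0 <= sigma^-1 - 0 * L by rewrite mul0r subr0 ltW.
have hF0' := hF0 c00 (fun x x' _ _ => ltac:(by rewrite !mul0r)).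
have hG0' := hG0 c01 (fun x x' _ _ => ltac:(by rewrite !mul0r)).

have nA1 : `|-1 : R| <= 1 by rewrite normrN normr1.
have nA1' : `|1 : R| <= 1 by rewrite normr1.
split.
- move=> H.
  have H' : sigma * tau * nA ^+ 2 + tau * 0 <= 1 by rewrite mulr0 addr0.
  have hb := @bnd_le _ _ _ _ _ s0 t0 H'.
  have hPQ : `|nA| ^+ 2 <= (tau^-1 - 0 * L - 2 * 0) * (sigma^-1 - 0 * L - 2 * 0).
    by rewrite nK !mul0r !mulr0 !subr0; move: hb; rewrite subr0.
  have c00' : 0 <= tau^-1 - 0 * L - 2 * 0 by rewrite mulr0 subr0.
  have c01' : 0 <= sigma^-1 - 0 * L - 2 * 0 by rewrite mulr0 subr0.
  split=> p q Dp' Dq' t t01.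
  + have [hD hi] := comb (F := fun x => tau^-1 * phip x - 0 * (fun _ : vec R n => (0 : R)) x)
       (G := fun x => sigma^-1 * phid x - 0 * (fun _ : vec R m => (0 : R)) x)
       nA1' K0 hK hnp hnd (lexx 0) c00' c01' hPQ hF0' hG0' Dp' Dq' t01.
    split => //; move: hi; rewrite /phi_plus /phi_pm /=; lra.
  + have [hD hi] := comb (F := fun x => tau^-1 * phip x - 0 * (fun _ : vec R n => (0 : R)) x)
       (G := fun x => sigma^-1 * phid x - 0 * (fun _ : vec R m => (0 : R)) x)
       nA1 K0 hK hnp hnd (lexx 0) c00' c01' hPQ hF0' hG0' Dp' Dq' t01.
    split => //; move: hi; rewrite /phi_minus /phi_pm /=; lra.
- move=> H.
  have H' : sigma * tau * nA ^+ 2 + tau * 0 < 1 by rewrite mulr0 addr0.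
  have hb := @bnd_lt _ _ _ _ _ s0 t0 H'.
  have [mu mu0 [hP hQ hPQ]] := @pick_mu R (tau^-1 - 0 * L) (sigma^-1 - 0 * L) (nA ^+ 2)
    c00 ltac:(by rewrite mul0r subr0) nA0 ltac:(by rewrite !mul0r !subr0; move: hb; rewrite subr0).
  rewrite -nK in hPQ.
  split; exists mu => // p q Dp' Dq' t t01.
  + have [hD hi] := comb (F := fun x => tau^-1 * phip x - 0 * (fun _ : vec R n => (0 : R)) x)
       (G := fun x => sigma^-1 * phid x - 0 * (fun _ : vec R m => (0 : R)) x)
       nA1' K0 hK hnp hnd (ltW mu0) hP hQ hPQ hF0' hG0' Dp' Dq' t01.
    split => //; move: hi; rewrite /phi_plus /phi_pm /N /=; lra.
  + have [hD hi] := comb (F := fun x => tau^-1 * phip x - 0 * (fun _ : vec R n => (0 : R)) x)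
       (G := fun x => sigma^-1 * phid x - 0 * (fun _ : vec R m => (0 : R)) x)
       nA1 K0 hK hnp hnd (ltW mu0) hP hQ hPQ hF0' hG0' Dp' Dq' t01.
    split => //; move: hi; rewrite /phi_minus /phi_pm /N /=; lra.
- move=> H.
  have tL : tau * L <= 1.
    have : 0 <= sigma * tau * nA ^+ 2 by apply: mulr_ge0; [apply: mulr_ge0; exact: ltW | exact: sqr_ge0].
    lra.
  have c10 : 0 <= tau^-1 - 1 * L.
    have e : tau^-1 - 1 * L = tau^-1 * (1 - tau * L).
      by field; rewrite gt_eqF.
    by rewrite e mulr_ge0 ?subr_ge0 // ltW.
  have hF1' := hF1 c10 hhp.
  have hb := @bnd_le _ _ _ _ _ s0 t0 H.
  have hPQ : `|nA| ^+ 2 <= (tau^-1 - 1 * L - 2 * 0) * (sigma^-1 - 0 * L - 2 * 0).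
    by rewrite nK mul1r !mul0r !mulr0 !subr0.
  have c10' : 0 <= tau^-1 - 1 * L - 2 * 0 by rewrite mulr0 subr0.
  have c01' : 0 <= sigma^-1 - 0 * L - 2 * 0 by rewrite mulr0 subr0.
  split=> p q Dp' Dq' t t01.
  + have [hD hi] := comb (F := fun x => tau^-1 * phip x - 1 * h x)
       (G := fun x => sigma^-1 * phid x - 0 * (fun _ : vec R m => (0 : R)) x)
       nA1' K0 hK hnp hnd (lexx 0) c10' c01' hPQ hF1' hG0' Dp' Dq' t01.
    split => //; move: hi; rewrite /phi_dcv /phi_plus /phi_pm /=; lra.
  + have [hD hi] := comb (F := fun x => tau^-1 * phip x - 1 * h x)
       (G := fun x => sigma^-1 * phid x - 0 * (fun _ : vec R m => (0 : R)) x)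
       nA1 K0 hK hnp hnd (lexx 0) c10' c01' hPQ hF1' hG0' Dp' Dq' t01.
    split => //; move: hi; rewrite /phi_pcv /phi_minus /phi_pm /=; lra.
- move=> H.
  have tL : tau * L <= 1.
    have : 0 <= sigma * tau * nA ^+ 2 by apply: mulr_ge0; [apply: mulr_ge0; exact: ltW | exact: sqr_ge0].
    lra.
  have c10 : 0 <= tau^-1 - 1 * L.
    have e : tau^-1 - 1 * L = tau^-1 * (1 - tau * L).
      by field; rewrite gt_eqF.
    by rewrite e mulr_ge0 ?subr_ge0 // ltW.
  have hF1' := hF1 c10 hhp.
  have hb := @bnd_lt _ _ _ _ _ s0 t0 H.
  have [mu mu0 [hP hQ hPQ]] := @pick_mu R (tau^-1 - 1 * L) (sigma^-1 - 0 * L) (nA ^+ 2)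
    c10 ltac:(by rewrite mul0r subr0) nA0 ltac:(by rewrite mul1r !mul0r !subr0).
  rewrite -nK in hPQ.
  split; exists mu => // p q Dp' Dq' t t01.
  + have [hD hi] := comb (F := fun x => tau^-1 * phip x - 1 * h x)
       (G := fun x => sigma^-1 * phid x - 0 * (fun _ : vec R m => (0 : R)) x)
       nA1' K0 hK hnp hnd (ltW mu0) hP hQ hPQ hF1' hG0' Dp' Dq' t01.
    split => //; move: hi; rewrite /phi_dcv /phi_plus /phi_pm /N /=; lra.
  + have [hD hi] := comb (F := fun x => tau^-1 * phip x - 1 * h x)
       (G := fun x => sigma^-1 * phid x - 0 * (fun _ : vec R m => (0 : R)) x)
       nA1 K0 hK hnp hnd (ltW mu0) hP hQ hPQ hF1' hG0' Dp' Dq' t01.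
    split => //; move: hi; rewrite /phi_pcv /phi_minus /phi_pm /N /=; lra.
Qed.
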